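(* Let $X$ be a metric space, $n\ge0$, and let $D^{(n+1)}_X$ be an $n$-dimensional control function of $X$. Define inductively $D^{(i+1)}_X(r)=D^{(i)}_X(3r)+2r$ for all $i\ge n+1$. Then for every $k\ge n+1$, $D^{(k)}_X$ is an $(n,k)$-dimensional control function of $X$.
   Context: A family of subsets of $X$ is $r$-disjoint if $d(a,b)\ge r$ whenever $a,b$ lie in different members; it is $D$-bounded if all members have diameter $\le D$. An $n$-dimensional control function of $X$ is $D_X\colon\mathbb R_+\to\mathbb R_+$ such that for every $r>0$ there are $r$-disjoint, $D_X(r)$-bounded families $\mathcal U_1,\dots,\mathcal U_{n+1}$ whose union covers $X$. For $k\ge n+1\ge1$, an $(n,k)$-dimensional control function of $X$ is $D_X\colon\mathbb R_+\to\mathbb R_+$ such that for every $r>0$ there are families $\mathcal U_1,\dots,\mathcal U_k$ of subsets of $X$, each $r$-disjoint and $D_X(r)$-bounded, such that every $x\in X$ belongs to members of at least $k-n$ of the families (equivalently, $\bigcup_{i\in T}\mathcal U_i$ covers $X$ for every $T\subset\{1,\dots,k\}$ with $|T|=n+1$). *)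

(* Defs.v *)
From Stdlib Require Import Reals List.
Import ListNotations.
Open Scope R_scope.

Definition is_metric {T : Type} (d : T -> T -> R) : Prop :=
  (forall x y, 0 <= d x y) /\
  (forall x y, d x y = 0 <-> x = y) /\
  (forall x y, d x y = d y x) /\
  (forall x y z, d x z <= d x y + d y z).

Definition family (T : Type) := (T -> Prop) -> Prop.

Definition r_disjoint {T : Type} (d : T -> T -> R) (r : R) (F : family T) : Prop :=
  forall U V a b, F U -> F V -> U <> V -> U a -> V b -> r <= d a b.

Definition D_bounded {T : Type} (d : T -> T -> R) (D : R) (F : family T) : Prop :=
  forall U a b, F U -> U a -> U b -> d a b <= D.

Definition in_family {T : Type} (F : family T) (x : T) : Prop :=
  exists U, F U /\ U x.

Definition n_control_function {T : Type} (d : T -> T -> R) (n : nat)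
  (DX : R -> R) : Prop :=
  (forall r, 0 < r -> 0 <= DX r) /\
  forall r, 0 < r ->
    exists U : nat -> family T,
      (forall i, (i < n + 1)%nat -> r_disjoint d r (U i) /\ D_bounded d (DX r) (U i)) /\
      (forall x, exists i, (i < n + 1)%nat /\ in_family (U i) x).

Definition nk_control_function {T : Type} (d : T -> T -> R) (n k : nat)
  (DX : R -> R) : Prop :=
  (forall r, 0 < r -> 0 <= DX r) /\
  forall r, 0 < r ->
    exists U : nat -> family T,
      (forall i, (i < k)%nat -> r_disjoint d r (U i) /\ D_bounded d (DX r) (U i)) /\
      (forall x, exists l : list nat,
          NoDup l /\ (k - n <= length l)%nat /\
          (forall i, In i l -> (i < k)%nat /\ in_family (U i) x)).

(* Main.v *)
Require Import Defs.
From Stdlib Require Import Reals List Lra Lia Classical FunctionalExtensionality PropExtensionality.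
Open Scope R_scope.

Definition Nr {T} (d : T -> T -> R) r (U : T -> Prop) : T -> Prop :=
  fun y => exists u, U u /\ d y u < r.
Definition Vf {T} d r (U0 : nat -> Defs.family T) i : Defs.family T :=
  fun W => exists U, U0 i U /\ W = Nr d r U.
Definition Yset {T} d r k (U0 : nat -> Defs.family T) (x : T) : Prop :=
  forall i, (i < k)%nat -> in_family (Vf d r U0 i) x -> in_family (U0 i) x.
Definition same {T} k (U0 : nat -> Defs.family T) (x y : T) : Prop :=
  forall i U, (i < k)%nat -> U0 i U -> (U x <-> U y).
Definition Wf {T} d r k (U0 : nat -> Defs.family T) : Defs.family T :=
  fun S => exists x0, Yset d r k U0 x0 /\ S = (fun y => Yset d r k U0 y /\ same k U0 x0 y).
Definition Fam {T} d r k (U0 : nat -> Defs.family T) j : Defs.family T :=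
  if Nat.ltb j k then Vf d r U0 j else Wf d r k U0.

Lemma step (T : Type) (d : T -> T -> R) (Hd : is_metric d) n k Dk Dk1
  (Hk : (n + 1 <= k)%nat)
  (Heq : forall r, 0 < r -> Dk1 r = Dk (3 * r) + 2 * r) :
  nk_control_function d n k Dk -> nk_control_function d n (S k) Dk1.
Proof.
  destruct Hd as [Hpos [Hzero [Hsym Htri]]].
  intros [Hnn H]. split.
  - intros r Hr. rewrite Heq by lra. specialize (Hnn (3*r)). assert (0 <= Dk (3*r)) by (apply Hnn; lra). lra.
  - intros r Hr. destruct (H (3*r)) as [U0 [HU Hcov]]; [lra|].
    rewrite Heq by lra.
    assert (Hdxx : forall x, d x x = 0) by (intros; apply Hzero; reflexivity).
    assert (UV : forall i x, in_family (U0 i) x -> in_family (Vf d r U0 i) x).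
    { intros i x [U [HU1 HU2]]. exists (Nr d r U). split.
      - exists U; auto.
      - exists x. split; auto. rewrite Hdxx; lra. }
    assert (Key : forall a b, Yset d r k U0 b -> d a b < r ->
               forall i U, (i < k)%nat -> U0 i U -> U a -> U b).
    { intros a b Yb Hab i U Hi HUi Ua.
      destruct (Yb i Hi) as [U' [HU' U'b]].
      - exists (Nr d r U). split. exists U; auto. exists a. split; auto. rewrite Hsym; lra.
      - destruct (classic (U = U')) as [E|E]. subst; auto.
        exfalso. destruct (HU i Hi) as [Hdis _].
        specialize (Hdis U U' a b HUi HU' E Ua U'b). lra. }
    exists (Fam d r k U0). split.
    + intros i Hi. unfold Fam. destruct (Nat.ltb_spec i k) as [Hik|Hik].
      * destruct (HU i Hik) as [Hdis Hbd]. split.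
        -- intros W W' a b [U [HUi ->]] [U' [HU'i ->]] Hne [u [Uu Hau]] [u' [Uu' Hbu']].
           assert (U <> U') by (intro; subst; auto).
           specialize (Hdis U U' u u' HUi HU'i H0 Uu Uu').
           pose proof (Htri u a u'). pose proof (Htri a b u'). rewrite (Hsym u a) in H1.
           lra.
        -- intros W a b [U [HUi ->]] [u [Uu Hau]] [u' [Uu' Hbu']].
           specialize (Hbd U u u' HUi Uu Uu').
           pose proof (Htri a u b). pose proof (Htri u u' b). rewrite (Hsym u' b) in H1.
           lra.
      * split.
        -- intros S S' a b [x0 [Y0 ->]] [x1 [Y1 ->]] Hne [Ya s0a] [Yb s1b].
           destruct (Rlt_le_dec (d a b) r) as [Hlt|]; [|auto].
           exfalso. apply Hne.
           assert (sab : same k U0 a b).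
           { intros i1 U Hi' HUi. split.
             - apply (Key a b Yb Hlt i1 U Hi' HUi).
             - apply (Key b a Ya) with (i := i1); auto. rewrite Hsym; auto. }
           apply functional_extensionality. intro y. apply propositional_extensionality.
           split; intros [Yy sy]; split; auto; intros j U Hj HUj.
           all: specialize (s0a j U Hj HUj); specialize (s1b j U Hj HUj);
                specialize (sab j U Hj HUj); specialize (sy j U Hj HUj); tauto.
        -- intros S a b [x0 [Y0 ->]] [Ya s0a] [Yb s0b].
           destruct (Hcov a) as [l [_ [Hlen Hl]]].
           destruct l as [|j l]. { simpl in Hlen. lia. }
           destruct (Hl j (or_introl eq_refl)) as [Hj [U [HUj Ua]]].
           destruct (HU j Hj) as [_ Hbd].
           assert (U b). { specialize (s0a j U Hj HUj); specialize (s0b j U Hj HUj); tauto. }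
           specialize (Hbd U a b HUj Ua H0).
           assert (0 <= Dk (3*r)) by (apply Hnn; lra). lra.
    + intros x. destruct (Hcov x) as [l [Hnd [Hlen Hl]]].
      destruct (classic (Yset d r k U0 x)) as [Yx|nYx].
      * exists (k :: l). split; [|split].
        -- constructor; auto. intro Hin. destruct (Hl k Hin). lia.
        -- cbn [length]. lia.
        -- intros i [<-|Hin].
           ++ split; [lia|]. unfold Fam. destruct (Nat.ltb_spec k k); [lia|].
              exists (fun y => Yset d r k U0 y /\ same k U0 x y). split.
              ** exists x. split; [assumption|reflexivity].
              ** split; auto. intros j U _ _. tauto.
           ++ destruct (Hl i Hin) as [Hi Hf]. split; [lia|]. unfold Fam.
              destruct (Nat.ltb_spec i k); [|lia]. auto.
      * apply not_all_ex_not in nYx. destruct nYx as [i0 nY].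
        apply imply_to_and in nY. destruct nY as [Hi0 nY].
        apply imply_to_and in nY. destruct nY as [Vx nUx].
        exists (i0 :: l). split; [|split].
        -- constructor; auto. intro Hin. destruct (Hl i0 Hin). auto.
        -- cbn [length]. lia.
        -- intros i [<-|Hin].
           ++ split; [lia|]. unfold Fam. destruct (Nat.ltb_spec i0 k); [|lia]. auto.
           ++ destruct (Hl i Hin) as [Hi Hf]. split; [lia|]. unfold Fam.
              destruct (Nat.ltb_spec i k); [|lia]. auto.
Qed.

Theorem mainTheorem6 (T : Type) (d : T -> T -> R) (Hd : is_metric d) (n : nat)
  (D : nat -> R -> R)
  (Hbase : n_control_function d n (D (n + 1)%nat))
  (Hrec : forall i, (n + 1 <= i)%nat -> forall r, 0 < r ->
            D (S i) r = D i (3 * r) + 2 * r) :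
  forall k, (n + 1 <= k)%nat -> nk_control_function d n k (D k).
Proof.
  assert (A : forall m, nk_control_function d n (n + 1 + m) (D (n + 1 + m)%nat)).
  { induction m.
    - rewrite Nat.add_0_r. destruct Hbase as [Hnn Hb]. split; auto.
      intros r Hr. destruct (Hb r Hr) as [U [HU Hc]]. exists U. split; auto.
      intros x. destruct (Hc x) as [i [Hi Hf]]. exists (i :: nil). split; [|split].
      + constructor; [intros []|constructor].
      + simpl. lia.
      + intros j [<-|[]]. auto.
    - replace (n + 1 + S m)%nat with (S (n + 1 + m)) by lia.
      apply step with (Dk := D (n + 1 + m)%nat); auto; try lia.
      intros r Hr. apply Hrec; auto; lia. }
  intros k Hk. replace k with (n + 1 + (k - n - 1))%nat by lia. apply A.
Qed.
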